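(* Let $q\ge 2$, $n\ge 1$, let $\mathcal C\subseteq \triangle_n^{q-1}$ be a multiset code, let $h_{\rm ins},h_{\rm del},h_{\rm sub}$ be non-negative integers and set $h=h_{\rm ins}+h_{\rm del}+2h_{\rm sub}$. The following are equivalent: (a) $\mathcal C$ can correct $h_{\rm ins}$ insertions, $h_{\rm del}$ deletions and $h_{\rm sub}$ substitutions; (b) $\mathcal C$ can correct $h$ insertions; (c) $\mathcal C$ can correct $h$ deletions.
   Context: Alphabet $[q]=\{0,1,\dots,q-1\}$, $q\ge2$. A multiset over $[q]$ is identified with its multiplicity vector $\mathbf x=(x_0,\dots,x_{q-1})\in\mathbb Z^q$, $x_i$ = number of copies of symbol $i$. $\triangle_n^{q-1}=\{\mathbf x\in\mathbb Z^q: x_i\ge0,\ \sum_{i=0}^{q-1}x_i=n\}$ (multisets of cardinality $n$). A multiset code of length $n$ over $[q]$ is a subset of $\triangle_n^{q-1}$ with at least two elements. Errors act on the multiset: a deletion removes one element present in the multiset (i.e. $\mathbf x\mapsto \mathbf x-\mathbf e_i$ for some $i$ with current multiplicity $\ge1$), an insertion adds one symbol $i\in[q]$ ($\mathbf x\mapsto\mathbf x+\mathbf e_i$), a substitution replaces one present element $i$ by a symbol $j$ ($\mathbf x\mapsto \mathbf x-\mathbf e_i+\mathbf e_j$); $\mathbf e_i$ is the $i$-th unit vector. A code can correct $a$ insertions, $b$ deletions and $c$ substitutions if no two distinct codewords can yield the same output multiset after being impaired by arbitrary patterns of at most $a$ insertions, at most $b$ deletions and at most $c$ substitutions; ''correct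 $h$ deletions'' means the case $a=c=0,b=h$, and similarly for insertions. *)

(* Defs.v *)
From mathcomp Require Import all_boot.
Set Implicit Arguments. Unset Strict Implicit. Unset Printing Implicit Defensive.

(* A multiset over [q] = {0,..,q-1} is its multiplicity vector x : 'I_q -> nat. *)
Definition mvec (q : nat) := {ffun 'I_q -> nat}.

Definition in_simplex (q n : nat) (x : mvec q) : Prop := \sum_(i < q) x i = n.

Definition add_unit (q : nat) (x : mvec q) (i : 'I_q) : mvec q :=
  [ffun k => x k + (k == i)].
Definition sub_unit (q : nat) (x : mvec q) (i : 'I_q) : mvec q :=
  [ffun k => x k - (k == i)].

Definition ins_step (q : nat) (x y : mvec q) : Prop :=
  exists i : 'I_q, y = add_unit x i.
Definition del_step (q : nat) (x y : mvec q) : Prop :=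
  exists i : 'I_q, 1 <= x i /\ y = sub_unit x i.
Definition sub_step (q : nat) (x y : mvec q) : Prop :=
  exists (i j : 'I_q), 1 <= x i /\ y = add_unit (sub_unit x i) j.

Inductive impaired (q : nat) : nat -> nat -> nat -> mvec q -> mvec q -> Prop :=
| imp_refl a b c x : impaired a b c x x
| imp_ins a b c x y z : ins_step x y -> impaired a b c y z -> impaired a.+1 b c x z
| imp_del a b c x y z : del_step x y -> impaired a b c y z -> impaired a b.+1 c x z
| imp_sub a b c x y z : sub_step x y -> impaired a b c y z -> impaired a b c.+1 x z.

Definition multiset_code (q n : nat) (C : mvec q -> Prop) : Prop :=
  (forall x, C x -> in_simplex n x) /\
  exists x y, [/\ C x, C y & x <> y].

Definition can_correct (q : nat) (C : mvec q -> Prop) (a b c : nat) : Prop :=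
  forall x y z, C x -> C y -> x <> y ->
    impaired a b c x z -> impaired a b c y z -> False.

(* Main.v *)
Require Import Defs.
From mathcomp Require Import all_boot zify.

Section S.
Variable q : nat.
Implicit Types x y z : mvec q.

Definition dd x y := \sum_(k < q) (x k - y k).
Definition ee x y := \sum_(k < q) ((x k - y k) + (y k - x k)).
Definition ss x := \sum_(k < q) x k.

Lemma sum_ind (i : 'I_q) : \sum_(k < q) ((k == i) : nat) = 1.
Proof. by rewrite (bigD1 i) //= eqxx big1 // => k /negbTE ->. Qed.

Lemma ee_tri x y z : ee x z <= ee x y + ee y z.
Proof. rewrite /ee -big_split; apply: leq_sum => k _ /=; lia. Qed.

Lemma ee_sym x y : ee x y = ee y x.
Proof. rewrite /ee; apply: eq_bigr => k _; lia. Qed.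

Lemma impaired_bound {a b c x z} : impaired a b c x z -> ee x z <= a + b + 2 * c.
Proof.
elim=> {a b c x z}.
- move=> a b c x; rewrite /ee big1 // => k _; lia.
- move=> a b c x y z [i ->] _ IH.
  have H1 : ee x (add_unit x i) <= 1.
    rewrite -(sum_ind i) /ee; apply: leq_sum => k _; rewrite ffunE.
    case: (k == i) => /=; lia.
  have := ee_tri x (add_unit x i) z; lia.
- move=> a b c x y z [i [_ ->]] _ IH.
  have H1 : ee x (sub_unit x i) <= 1.
    rewrite -(sum_ind i) /ee; apply: leq_sum => k _; rewrite ffunE.
    case: (k == i) => /=; lia.
  have := ee_tri x (sub_unit x i) z; lia.
- move=> a b c x y z [i [j [_ ->]]] _ IH.
  have H1 : ee x (add_unit (sub_unit x i) j) <= 2.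
    rewrite -[2]/(1 + 1) -{1}(sum_ind i) -(sum_ind j) /ee -big_split.
    apply: leq_sum => k _; rewrite !ffunE.
    case: (k == i); case: (k == j) => /=; lia.
  have := ee_tri x (add_unit (sub_unit x i) j) z; lia.
Qed.

Lemma dd_sym x y : ss x = ss y -> dd x y = dd y x.
Proof.
move=> E.
have : ss x + dd y x = ss y + dd x y.
  rewrite /ss /dd -!big_split; apply: eq_bigr => k _ /=; lia.
lia.
Qed.

Lemma ee_dd x y : ee x y = dd x y + dd y x.
Proof. by rewrite /ee big_split. Qed.

Lemma lemA a b c x y z : ss x = ss y ->
  impaired a b c x z -> impaired a b c y z -> dd x y <= a + b + 2 * c.
Proof.
move=> E H1 H2.
have := impaired_bound H1; have := impaired_bound H2.
have := ee_tri x z y; rewrite (ee_sym z y) ee_dd (dd_sym _ _ E); lia.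
Qed.

Lemma witness x y : 0 < dd x y -> exists i, y i < x i.
Proof.
case: (boolP [exists i, y i < x i]) => [/existsP // | /existsPn H] Hd.
suff : dd x y = 0 by lia.
rewrite /dd big1 // => k _; apply/eqP; rewrite subn_eq0 leqNgt; exact: H.
Qed.

Lemma dd_ge x y k : x k - y k <= dd x y.
Proof. by rewrite /dd (bigD1 k) //= leq_addr. Qed.

Lemma dd0 x y : ss x = ss y -> dd x y = 0 -> x = y.
Proof.
move=> E H; have H' : dd y x = 0 by rewrite -(dd_sym _ _ E).
apply/ffunP => k; apply/eqP; rewrite eqn_leq -!subn_eq0; have := dd_ge x y k; have := dd_ge y x k; rewrite H H' !leqn0 => -> ->; done.
Qed.
Lemma neq_ij x y (i j : 'I_q) : y i < x i -> x j < y j -> (i == j) = false.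
Proof. by move=> Hi Hj; apply/negbTE/eqP => E; move: Hi Hj; rewrite E; lia. Qed.

Lemma L_sub x y i j : y i < x i -> x j < y j ->
  dd (add_unit (sub_unit x i) j) y + 1 = dd x y.
Proof.
move=> Hi Hj; have Hij := neq_ij _ _ _ _ Hi Hj.
rewrite /dd -(sum_ind i) -big_split; apply: eq_bigr => k _ /=; rewrite !ffunE.
case: (eqVneq k i) => [->|ki]; first by rewrite Hij /=; lia.
case: (eqVneq k j) => [->|kj] /=; lia.
Qed.

Lemma L_ins x y i j : y i < x i -> x j < y j ->
  dd (add_unit x j) (add_unit y i) + 1 = dd x y.
Proof.
move=> Hi Hj; have Hij := neq_ij _ _ _ _ Hi Hj.
rewrite /dd -(sum_ind i) -big_split; apply: eq_bigr => k _ /=; rewrite !ffunE.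
case: (eqVneq k i) => [->|ki]; first by rewrite Hij /=; lia.
case: (eqVneq k j) => [->|kj] /=; lia.
Qed.

Lemma L_del x y i j : y i < x i -> x j < y j ->
  dd (sub_unit x i) (sub_unit y j) + 1 = dd x y.
Proof.
move=> Hi Hj; have Hij := neq_ij _ _ _ _ Hi Hj.
rewrite /dd -(sum_ind i) -big_split; apply: eq_bigr => k _ /=; rewrite !ffunE.
case: (eqVneq k i) => [->|ki]; first by rewrite Hij /=; lia.
case: (eqVneq k j) => [->|kj] /=; lia.
Qed.

Lemma ss_add x i : ss (add_unit x i) = ss x + 1.
Proof.
rewrite /ss -(sum_ind i) -big_split; apply: eq_bigr => k _ /=; rewrite !ffunE //.
Qed.

Lemma ss_sub x i : 1 <= x i -> ss (sub_unit x i) + 1 = ss x.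
Proof.
move=> Hi; rewrite /ss -(sum_ind i) -big_split; apply: eq_bigr => k _ /=; rewrite !ffunE.
case: (eqVneq k i) => [->|ki] /=; lia.
Qed.

Lemma ss_subst x i j : 1 <= x i -> ss (add_unit (sub_unit x i) j) = ss x.
Proof. move=> Hi; rewrite ss_add; have := ss_sub _ _ Hi; lia. Qed.
Lemma lemB k : forall a b c x y, ss x = ss y -> dd x y = k -> k <= a + b + 2 * c ->
  exists z, impaired a b c x z /\ impaired a b c y z.
Proof.
elim/ltn_ind: k => k IH a b c x y E Hd Hk.
case: (posnP k) => [k0|kpos].
  exists x; split; first exact: imp_refl.
  rewrite (dd0 _ _ E) ?Hd //; exact: imp_refl.
have [i Hi] := witness x y (ltac:(lia)).
have [j Hj] := witness y x (ltac:(rewrite -(dd_sym _ _ E); lia)).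
have Li := L_sub _ _ _ _ Hi Hj.
case: c Hk => [|c] Hk.
- case: a Hk => [|a] Hk.
  + case: b Hk => [|b] Hk; first lia.
    have [z [H1 H2]] := IH k.-1 (ltac:(lia)) 0 b 0 (sub_unit x i) (sub_unit y j)
      (ltac:(have := ss_sub _ _ (ltac:(lia) : 1 <= x i); have := ss_sub _ _ (ltac:(lia) : 1 <= y j); lia))
      (ltac:(have := L_del _ _ _ _ Hi Hj; lia)) (ltac:(lia)).
    exists z; split; [apply: imp_del H1 | apply: imp_del H2].
      by exists i; split => //; lia.
    by exists j; split => //; lia.
  + have [z [H1 H2]] := IH k.-1 (ltac:(lia)) a b 0 (add_unit x j) (add_unit y i)
      (ltac:(rewrite !ss_add; lia))
      (ltac:(have := L_ins _ _ _ _ Hi Hj; lia)) (ltac:(lia)).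
    exists z; split; [apply: imp_ins H1 | apply: imp_ins H2].
      by exists j.
    by exists i.
- set x' := add_unit (sub_unit x i) j.
  have E' : ss x' = ss y by rewrite /x' ss_subst //; lia.
  have Li' : dd x' y + 1 = dd x y := Li.
  case: (ltnP 1 k) => Hk1.
  + have [i' Hi'] := witness x' y (ltac:(lia)).
    have [j' Hj'] := witness y x' (ltac:(rewrite -(dd_sym _ _ E'); lia)).
    have Lj := L_sub _ _ _ _ Hj' Hi'.
    set y' := add_unit (sub_unit y j') i'.
    have Lj' : dd y' x' + 1 = dd y x' := Lj.
    have E'' : ss x' = ss y' by rewrite /y' ss_subst //; lia.
    have [z [H1 H2]] := IH k.-2 (ltac:(lia)) a b c x' y' E''
      (ltac:(rewrite (dd_sym _ _ E''); have := dd_sym _ _ E'; lia)) (ltac:(lia)).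
    exists z; split; [apply: imp_sub H1 | apply: imp_sub H2].
      by exists i, j; split => //; lia.
    by exists j', i'; split => //; lia.
  + exists y; split; last exact: imp_refl.
    apply: (imp_sub (y := x')); last by rewrite (dd0 _ _ E') ?Hd; [exact: imp_refl|lia].
    by exists i, j; split => //; lia.
Qed.
End S.

Lemma correct_iff q (C : mvec q -> Prop) a b c :
  (forall x y, C x -> C y -> ss q x = ss q y) ->
  (can_correct C a b c <-> forall x y, C x -> C y -> x <> y -> a + b + 2 * c < dd q x y).
Proof.
move=> HS; split.
- move=> H x y Cx Cy nxy; rewrite ltnNge; apply/negP => Hle.
  have [z [H1 H2]] := @lemB q (dd q x y) a b c x y (HS x y Cx Cy) erefl Hle.
  exact: H x y z Cx Cy nxy H1 H2.
- move=> H x y z Cx Cy nxy H1 H2.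
  have := @lemA q _ _ _ _ _ _ (HS x y Cx Cy) H1 H2; have := H x y Cx Cy nxy; lia.
Qed.

Theorem mainTheorem1 (q n : nat) (hq : 2 <= q) (hn : 1 <= n)
  (C : mvec q -> Prop) (HC : multiset_code n C)
  (h_ins h_del h_sub : nat) :
  let h := h_ins + h_del + 2 * h_sub in
  (can_correct C h_ins h_del h_sub <-> can_correct C h 0 0) /\
  (can_correct C h 0 0 <-> can_correct C 0 h 0).
Proof.
cbv zeta.
have HS : forall x y, C x -> C y -> ss q x = ss q y.
  move=> x y Cx Cy; case: HC => Hs _; rewrite /ss (Hs x Cx) (Hs y Cy) //.
rewrite !(correct_iff q C _ _ _ HS).
split; split => H x y Cx Cy nxy; have := H x y Cx Cy nxy; lia.
Qed.
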